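(* Let $N=3$ and let $(p_1,p_2,p_3)$ be a probability vector with $$4p_1^2p_2p_3-\big(p_1-p_1^2-p_2p_3\big)^2\ge0$$ (the closed region bounded by the 3-hypocycloid). Then the Weyl channel $\Phi_{\vec p}=p_1\,\mathbb{I}\otimes\mathbb{I}+p_2\,X\otimes\overline{X}+p_3\,X^2\otimes\overline{X^2}$ is unistochastic, $\Phi_{\vec p}\in\mathcal{U}_3^Q$, and the corresponding transition matrix $T(\Phi_{\vec p})=p_1\mathbb{I}_3+p_2X+p_3X^2$ is unistochastic, $T(\Phi_{\vec p})\in\mathcal{U}_3^C$.
   Context: $X$ is the $3\times3$ shift $X|j\rangle=|j\oplus1\rangle$ (addition mod 3). Channels are identified with superoperators acting on $|A\rangle\rangle=\sum A_{ij}|i\rangle|j\rangle$ ($\rho\mapsto K\rho K^\dagger$ corresponds to $K\otimes\overline K$). $\mathcal{U}_3^Q$ is the set of channels $\Psi_U(\rho)=\mathrm{Tr}_E[U(\rho\otimes\mathbb{I}_3/3)U^\dagger]$ with $U\in U(9)$ acting on $\mathbb{C}^3\otimes\mathbb{C}^3_E$; $\mathcal{U}_3^C=\{V\odot\overline{V}:V\in U(3)\}$ with $\odot$ the entrywise product. The transition matrix of a channel is $T(\Phi)_{ij}=\mathrm{Tr}[|i\rangle\langle i|\,\Phi(|j\rangle\langle j|)]$. *)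

(* Defs.v *)
From mathcomp Require Import all_boot all_algebra.
From mathcomp Require Import reals complex mxtens.
Set Implicit Arguments. Unset Strict Implicit. Unset Printing Implicit Defensive.
Import GRing.Theory Num.Theory.
Local Open Scope ring_scope.

Section Defs.
Variable R : realType.
Local Notation C := R[i].

Definition rC (x : R) : C := Complex x 0.

Definition adjmx {m n} (A : 'M[C]_(m, n)) : 'M[C]_(n, m) :=
  (map_mx Num.conj A)^T.

Definition unitarymx {n} (U : 'M[C]_n) : Prop := U *m adjmx U = 1%:M.

(* shift X|j> = |j (+) 1>, i.e. X_{ij} = [i = j+1 mod 3] *)
Definition shiftX : 'M[C]_3 :=
  \matrix_(i < 3, j < 3) ((nat_of_ord i == (j.+1 %% 3)%N)%:R).

Definition chan3 := 'M[C]_3 -> 'M[C]_3.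

(* Weyl channel p1 I(x)I + p2 X(x)conj X + p3 X^2 (x) conj X^2,
   i.e. rho |-> p1 rho + p2 X rho X^dag + p3 X^2 rho (X^2)^dag *)
Definition weyl_channel (p1 p2 p3 : R) : chan3 := fun rho =>
  rC p1 *: rho
  + rC p2 *: (shiftX *m rho *m adjmx shiftX)
  + rC p3 *: ((shiftX ^+ 2) *m rho *m adjmx (shiftX ^+ 2)).

(* partial trace over the second (environment) factor of C^3 (x) C^3_E,
   with the product basis indexed by mxtens_index (i, e) *)
Definition ptraceE (M : 'M[C]_(3 * 3)) : 'M[C]_3 :=
  \matrix_(i < 3, j < 3)
     \sum_(e < 3) M (mxtens_index (i, e)) (mxtens_index (j, e)).

Definition Psi (U : 'M[C]_(3 * 3)) : chan3 := fun rho =>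
  ptraceE (U *m (rho *t ((rC 3)^-1 *: (1%:M : 'M[C]_3))) *m adjmx U).

Definition in_UQ3 (Phi : chan3) : Prop :=
  exists U : 'M[C]_(3 * 3), unitarymx U /\ forall rho, Psi U rho = Phi rho.

Definition transition (Phi : chan3) : 'M[C]_3 :=
  \matrix_(i < 3, j < 3) \tr (delta_mx i i *m Phi (delta_mx j j)).

Definition in_UC3 (T : 'M[C]_3) : Prop :=
  exists V : 'M[C]_3, unitarymx V /\
    T = \matrix_(i < 3, j < 3) (V i j * (V i j)^*).

End Defs.

(* Main.v *)
Require Import Defs.
From mathcomp Require Import all_boot all_algebra.
From mathcomp Require Import reals complex mxtens.
From mathcomp Require Import ring lra.
From mathcomp Require Import order.
Import Order.TTheory GRing.Theory Num.Theory.
Local Open Scope ring_scope.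
Set Implicit Arguments. Unset Strict Implicit.

Section S.
Variable R : realType.
Local Notation C := R[i].
Local Notation o0 := (@Ordinal 3 0 isT).
Local Notation o1 := (@Ordinal 3 1 isT).
Local Notation o2 := (@Ordinal 3 2 isT).

Lemma ord3_ind (P : 'I_3 -> Prop) : P o0 -> P o1 -> P o2 -> forall i, P i.
Proof.
move=> H0 H1 H2 [[|[|[|i]]] Hi] //.
- by rewrite (bool_irrelevance Hi isT).
- by rewrite (bool_irrelevance Hi isT).
- by rewrite (bool_irrelevance Hi isT).
Qed.

Lemma sum3 (V : zmodType) (F : 'I_3 -> V) : \sum_(i < 3) F i = F o0 + F o1 + F o2.
Proof.
rewrite !big_ord_recl big_ord0 addr0 addrA.
by congr (F _ + F _ + F _); apply: val_inj.
Qed.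

Definition M3 (a b c d e f g h k : C) : 'M[C]_3 :=
  \matrix_(i < 3, j < 3) nth 0 (nth [::] [:: [:: a; b; c]; [:: d; e; f]; [:: g; h; k]] i) j.

Lemma mx3_ext (A B : 'M[C]_3) :
  A o0 o0 = B o0 o0 -> A o0 o1 = B o0 o1 -> A o0 o2 = B o0 o2 ->
  A o1 o0 = B o1 o0 -> A o1 o1 = B o1 o1 -> A o1 o2 = B o1 o2 ->
  A o2 o0 = B o2 o0 -> A o2 o1 = B o2 o1 -> A o2 o2 = B o2 o2 -> A = B.
Proof.
move=> *; apply/matrixP; apply: ord3_ind; apply: ord3_ind => //.
Qed.

Lemma mulM3 a b c d e f g h k a' b' c' d' e' f' g' h' k' :
  M3 a b c d e f g h k *m M3 a' b' c' d' e' f' g' h' k' =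
  M3 (a*a' + b*d' + c*g') (a*b' + b*e' + c*h') (a*c' + b*f' + c*k')
     (d*a' + e*d' + f*g') (d*b' + e*e' + f*h') (d*c' + e*f' + f*k')
     (g*a' + h*d' + k*g') (g*b' + h*e' + k*h') (g*c' + h*f' + k*k').
Proof. by apply: mx3_ext; rewrite !mxE sum3 !mxE. Qed.

Lemma adjM3 a b c d e f g h k :
  adjmx (M3 a b c d e f g h k) = M3 a^* d^* g^* b^* e^* h^* c^* f^* k^*.
Proof. by apply: mx3_ext; rewrite !mxE. Qed.

Lemma addM3 a b c d e f g h k a' b' c' d' e' f' g' h' k' :
  M3 a b c d e f g h k + M3 a' b' c' d' e' f' g' h' k' =
  M3 (a+a') (b+b') (c+c') (d+d') (e+e') (f+f') (g+g') (h+h') (k+k').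
Proof. by apply: mx3_ext; rewrite !mxE. Qed.

Lemma scaleM3 x a b c d e f g h k :
  x *: M3 a b c d e f g h k = M3 (x*a) (x*b) (x*c) (x*d) (x*e) (x*f) (x*g) (x*h) (x*k).
Proof. by apply: mx3_ext; rewrite !mxE. Qed.

Lemma trM3 a b c d e f g h k : \tr (M3 a b c d e f g h k) = a + e + k.
Proof. by rewrite /mxtrace sum3 !mxE. Qed.

Lemma oneM3 : (1%:M : 'M[C]_3) = M3 1 0 0 0 1 0 0 0 1.
Proof. by apply: mx3_ext; rewrite !mxE. Qed.

Lemma XM3 : shiftX R = M3 0 0 1 1 0 0 0 1 0.
Proof. by apply: mx3_ext; rewrite !mxE. Qed.

Lemma X2M3 : shiftX R ^+ 2 = M3 0 1 0 0 0 1 1 0 0.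
Proof.
rewrite expr2 -mulmxE XM3 mulM3.
by congr M3; rewrite ?mul0r ?mulr0 ?mul1r ?add0r ?addr0.
Qed.

Local Notation X := (shiftX R).

Lemma conjC01 : ((0:C)^* = 0) * ((1:C)^* = 1).
Proof. by split; [rewrite rmorph0 | rewrite rmorph1]. Qed.

Ltac simp0 := rewrite ?conjC01 ?mul0r ?mulr0 ?mul1r ?mulr1 ?add0r ?addr0.

Lemma X_unitary : Defs.unitarymx X.
Proof.
by rewrite /Defs.unitarymx XM3 adjM3 mulM3 oneM3; congr M3; simp0.
Qed.

Lemma X3 : X ^+ 3 = 1.
Proof.
have -> : (1 : 'M[C]_3) = 1%:M by [].
by rewrite exprS X2M3 -mulmxE XM3 mulM3 oneM3; congr M3; simp0.
Qed.

Lemma adjmxM m n p (A : 'M[C]_(m, n)) (B : 'M[C]_(n, p)) :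
  adjmx (A *m B) = adjmx B *m adjmx A.
Proof. by rewrite /adjmx map_mxM trmx_mul. Qed.

Lemma adjmxZ m n (c : C) (A : 'M[C]_(m, n)) : adjmx (c *: A) = c^* *: adjmx A.
Proof. by apply/matrixP => i j; rewrite !mxE rmorphM. Qed.

Lemma adjmx1 : adjmx (1%:M : 'M[C]_3) = 1%:M.
Proof. by rewrite oneM3 adjM3; simp0. Qed.

Lemma adjmxK m n (A : 'M[C]_(m, n)) : adjmx (adjmx A) = A.
Proof. by apply/matrixP => i j; rewrite !mxE conjCK. Qed.

Lemma Xpow_unitary n : X ^+ n *m adjmx (X ^+ n) = 1%:M.
Proof.
elim: n => [|n IH]; first by rewrite expr0 mul1mx adjmx1.
rewrite exprS mulmxE adjmxM -mulmxE mulmxA -[X *m _ *m _]mulmxA IH mulmx1.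
exact: X_unitary.
Qed.

Lemma Xpow_mod n : X ^+ n = X ^+ (n %% 3).
Proof.
by rewrite {1}(divn_eq n 3) exprD mulnC exprM X3 expr1n mul1r.
Qed.

Lemma XpowD_adj e g f :
  X ^+ (e + 2 * f) *m adjmx (X ^+ (g + 2 * f)) = X ^+ e *m adjmx (X ^+ g).
Proof.
rewrite exprD [X ^+ (g + _)]exprD mulmxE adjmxM -!mulmxE mulmxA -[X ^+ e *m _ *m _]mulmxA.
by rewrite Xpow_unitary mulmx1.
Qed.

Definition blk (A : 'I_3 -> 'I_3 -> 'M[C]_3) : 'M[C]_(3 * 3) :=
  \sum_(e < 3) \sum_(f < 3) A e f *t delta_mx e f.

Lemma blkE A i e j f :
  blk A (mxtens_index (i, e)) (mxtens_index (j, f)) = A e f i j.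
Proof.
rewrite /blk summxE (bigD1 e) //= summxE (bigD1 f) //= tensmxE mxE !eqxx mulr1.
rewrite big1 => [|f' nf]; last by rewrite tensmxE mxE eqxx /= eq_sym (negbTE nf) mulr0.
rewrite addr0 big1 ?addr0 // => e' ne; rewrite summxE big1 // => f' _.
by rewrite tensmxE mxE eq_sym (negbTE ne) mulr0.
Qed.

Lemma sum_tens (F : 'I_(3 * 3) -> C) :
  \sum_(k < 3 * 3) F k = \sum_(i < 3) \sum_(e < 3) F (mxtens_index (i, e)).
Proof.
rewrite (reindex (@mxtens_index 3 3)) /=; last first.
  by exists (@mxtens_unindex 3 3) => x _; [apply: mxtens_indexK | apply: mxtens_unindexK].
by rewrite pair_big /=; apply: eq_bigr => -[i e].
Qed.

Lemma blk_mul A B :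
  blk A *m blk B = blk (fun e g => \sum_(f < 3) A e f *m B f g).
Proof.
apply/matrixP => x y.
case: (mxtens_indexP x) => i e; case: (mxtens_indexP y) => j g.
rewrite mxE blkE summxE sum_tens.
under eq_bigr => k _ do under eq_bigr => f _ do rewrite !blkE.
rewrite exchange_big; apply: eq_bigr => f _; rewrite mxE.
by apply: eq_bigr.
Qed.

Lemma adj_blk A : adjmx (blk A) = blk (fun e f => adjmx (A f e)).
Proof.
apply/matrixP => x y.
case: (mxtens_indexP x) => i e; case: (mxtens_indexP y) => j g.
by rewrite blkE !mxE blkE.
Qed.

Lemma ptrace_blk A : ptraceE (blk A) = \sum_(e < 3) A e e.
Proof.
apply/matrixP => i j; rewrite !mxE summxE.
by apply: eq_bigr => e _; rewrite blkE.
Qed.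

Lemma idx_eq i e j f :
  (mxtens_index (i, e) == mxtens_index (j, f) :> 'I_(3 * 3)) = (i == j) && (e == f).
Proof. by rewrite (inj_eq (can_inj (@mxtens_indexK 3 3))) xpair_eqE. Qed.

Lemma blk_1 : blk (fun e f => ((e == f)%:R : C) *: 1%:M) = 1%:M.
Proof.
apply/matrixP => x y.
case: (mxtens_indexP x) => i e; case: (mxtens_indexP y) => j g.
rewrite blkE !mxE idx_eq.
by case: (i == j); case: (e == g); rewrite /= ?mulr0 ?mulr1.
Qed.

Lemma tens_blk (rho : 'M[C]_3) (c : C) :
  rho *t (c *: (1%:M : 'M[C]_3)) = blk (fun e f => ((e == f)%:R : C) *: (c *: rho)).
Proof.
apply/matrixP => x y.
case: (mxtens_indexP x) => i e; case: (mxtens_indexP y) => j g.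
rewrite blkE tensmxE !mxE.
by case: (e == g); rewrite /= ?mulr0 ?mulr1 ?mul0r ?mul1r // mulrC.
Qed.

Lemma sumd (G : 'I_3 -> 'M[C]_3) f' :
  \sum_(f < 3) ((f == f')%:R : C) *: G f = G f'.
Proof.
rewrite (bigD1 f') //= eqxx scale1r big1 ?addr0 // => f /negbTE ->.
by rewrite scale0r.
Qed.

Lemma sumd' (G : 'I_3 -> 'M[C]_3) f' :
  \sum_(f < 3) ((f' == f)%:R : C) *: G f = G f'.
Proof. by under eq_bigr => f _ do rewrite eq_sym; apply: sumd. Qed.

Lemma blk_ext A B : (forall e f, A e f = B e f) -> blk A = blk B.
Proof. by move=> H; apply: eq_bigr => e _; apply: eq_bigr => f _; rewrite H. Qed.

Definition Ublk (V : 'M[C]_3) := blk (fun e f => V e f *: X ^+ (e + 2 * f)).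

Lemma Ublk_unitary V : Defs.unitarymx V -> Defs.unitarymx (Ublk V).
Proof.
rewrite /Defs.unitarymx => HV; rewrite /Ublk adj_blk blk_mul -blk_1.
apply: blk_ext => e g.
under eq_bigr => f _ do rewrite adjmxZ -scalemxAl -scalemxAr scalerA XpowD_adj.
rewrite -scaler_suml.
have -> : \sum_(f < 3) V e f * (V g f)^* = (V *m adjmx V) e g.
  by rewrite mxE; apply: eq_bigr => f _; rewrite !mxE.
rewrite HV mxE.
case: eqP => [->|_]; first by rewrite Xpow_unitary.
by rewrite !scale0r.
Qed.

Definition Gt (rho : 'M[C]_3) n := X ^+ n *m rho *m adjmx (X ^+ n).

Lemma Psi_Ublk V rho :
  Psi (Ublk V) rho =
  \sum_(e < 3) \sum_(f < 3) (V e f * (V e f)^* * (rC 3)^-1) *: Gt rho (e + 2 * f).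
Proof.
rewrite /Psi tens_blk /Ublk blk_mul adj_blk blk_mul ptrace_blk.
apply: eq_bigr => e _; apply: eq_bigr => f _.
under eq_bigr => k _ do rewrite -scalemxAr.
rewrite sumd adjmxZ /Gt.
do 3 rewrite -?scalemxAl -?scalemxAr ?scalerA.
by congr (_ *: _); rewrite mulrC mulrA.
Qed.

Definition Tm (p1 p2 p3 : R) : 'M[C]_3 :=
  rC p1 *: 1%:M + rC p2 *: X + rC p3 *: X ^+ 2.

Lemma TmM3 p1 p2 p3 : Tm p1 p2 p3 =
  M3 (rC p1) (rC p3) (rC p2) (rC p2) (rC p1) (rC p3) (rC p3) (rC p2) (rC p1).
Proof.
by rewrite /Tm oneM3 X2M3 XM3 !scaleM3 !addM3; congr M3; simp0.
Qed.

Lemma Gmod rho n : Gt rho n = Gt rho (n %% 3).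
Proof. by rewrite /Gt -Xpow_mod. Qed.

Lemma UQ_from_V V p1 p2 p3 :
  Defs.unitarymx V -> (forall i j, V i j * (V i j)^* = Tm p1 p2 p3 i j) ->
  in_UQ3 (weyl_channel p1 p2 p3).
Proof.
move=> HV VT; exists (Ublk V); split; first exact: Ublk_unitary.
move=> rho; rewrite Psi_Ublk.
under eq_bigr => e _ do under eq_bigr => f _ do rewrite VT TmM3 (Gmod rho).
rewrite !sum3 !mxE /=.
rewrite -[Gt rho ((0 + 2 * 0) %% 3)]/(Gt rho 0) -[Gt rho ((0 + 2 * 1) %% 3)]/(Gt rho 2).
rewrite -[Gt rho ((0 + 2 * 2) %% 3)]/(Gt rho 1) -[Gt rho ((1 + 2 * 0) %% 3)]/(Gt rho 1).
rewrite -[Gt rho ((1 + 2 * 1) %% 3)]/(Gt rho 0) -[Gt rho ((1 + 2 * 2) %% 3)]/(Gt rho 2).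
rewrite -[Gt rho ((2 + 2 * 0) %% 3)]/(Gt rho 2) -[Gt rho ((2 + 2 * 1) %% 3)]/(Gt rho 1).
rewrite -[Gt rho ((2 + 2 * 2) %% 3)]/(Gt rho 0).
rewrite /weyl_channel -[X *m rho *m _]/(Gt rho 1) -[X ^+ 2 *m rho *m _]/(Gt rho 2).
have -> : Gt rho 0 = rho by rewrite /Gt expr0 mul1mx adjmx1 mulmx1.
move: (Gt rho 1) (Gt rho 2) => g1 g2.
have -> : rC 3 = 3%:R :> C by rewrite /rC; change ((3%:R : R)%:C%C = 3%:R); rewrite rmorph_nat.
have n3 : (3%:R : C) != 0 by rewrite pnatr_eq0.
apply/matrixP => a b; rewrite !mxE.
by field.
Qed.

Lemma delta00 : delta_mx o0 o0 = M3 1 0 0 0 0 0 0 0 0.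
Proof. by apply: mx3_ext; rewrite !mxE. Qed.
Lemma delta11 : delta_mx o1 o1 = M3 0 0 0 0 1 0 0 0 0.
Proof. by apply: mx3_ext; rewrite !mxE. Qed.
Lemma delta22 : delta_mx o2 o2 = M3 0 0 0 0 0 0 0 0 1.
Proof. by apply: mx3_ext; rewrite !mxE. Qed.

Lemma transition_weyl p1 p2 p3 :
  transition (weyl_channel p1 p2 p3) = Tm p1 p2 p3.
Proof.
rewrite TmM3; apply: mx3_ext; rewrite !mxE /=;
rewrite ?delta00 ?delta11 ?delta22 /weyl_channel X2M3 XM3 !adjM3 !mulM3 !scaleM3 !addM3 !mulM3 trM3;
by simp0; simp0.
Qed.

Definition mkV (a b c d e f : C) : 'M[C]_3 :=
  M3 a b c d e f (b*f - c*e)^* (c*d - a*f)^* (a*e - b*d)^*.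

Lemma mkV_unitary a b c d e f :
  a * a^* + b * b^* + c * c^* = 1 -> d * d^* + e * e^* + f * f^* = 1 ->
  a * d^* + b * e^* + c * f^* = 0 -> Defs.unitarymx (mkV a b c d e f).
Proof.
move=> h1 h2 h3.
have h3' : d * a^* + e * b^* + f * c^* = 0.
  by move/(congr1 Num.conj): h3; rewrite !rmorphD !rmorphM /= !conjCK conjC0 => <-; ring.
rewrite /Defs.unitarymx /mkV adjM3 mulM3 oneM3 ?conjCK; congr M3 => //; try ring.
rewrite !rmorphB !rmorphM /=.
transitivity ((a*a^*+b*b^*+c*c^*)*(d*d^*+e*e^*+f*f^*)
   - (a*d^*+b*e^*+c*f^*)*(d*a^*+e*b^*+f*c^*)); first ring.
by rewrite h1 h2 h3 h3'; ring.
Qed.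

Lemma rCD (x y : R) : rC (x + y) = rC x + rC y.
Proof. by rewrite /rC -[RHS]/(Complex (x + y) (0 + 0)) addr0. Qed.

Lemma from_rows p1 p2 p3 a b c d e f : p1 + p2 + p3 = 1 ->
  a * a^* = rC p1 -> b * b^* = rC p3 -> c * c^* = rC p2 ->
  d * d^* = rC p2 -> e * e^* = rC p1 -> f * f^* = rC p3 ->
  a * d^* + b * e^* + c * f^* = 0 ->
  in_UQ3 (weyl_channel p1 p2 p3) /\ in_UC3 (Tm p1 p2 p3).
Proof.
move=> hs ha hb hc hd he hf ho.
have rs : rC p1 + rC p2 + rC p3 = 1 by rewrite -!rCD hs.
have HV : Defs.unitarymx (mkV a b c d e f).
  apply: mkV_unitary => //; first by rewrite ha hb hc -rs; ring.
  by rewrite hd he hf -rs; ring.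
have HV' := mulmx1C HV.
move: (HV'); rewrite /mkV adjM3 mulM3 oneM3 => HC.
have c0 := congr1 (fun M : 'M[C]_3 => M o0 o0) HC.
have c1 := congr1 (fun M : 'M[C]_3 => M o1 o1) HC.
have c2 := congr1 (fun M : 'M[C]_3 => M o2 o2) HC.
move: c0 c1 c2; rewrite !mxE /= ?conjCK => c0 c1 c2.
have VT : forall i j, mkV a b c d e f i j * (mkV a b c d e f i j)^* = Tm p1 p2 p3 i j.
  rewrite TmM3; apply: ord3_ind; apply: ord3_ind; rewrite /mkV !mxE /= ?conjCK //.
  - rewrite mulrC; apply: (addrI (a^* * a + d^* * d)); rewrite c0 [a^* * a]mulrC ha [d^* * _]mulrC hd -rs; ring.
  - rewrite mulrC; apply: (addrI (b^* * b + e^* * e)); rewrite c1 [b^* * b]mulrC hb [e^* * _]mulrC he -rs; ring.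
  - rewrite mulrC; apply: (addrI (c^* * c + f^* * f)); rewrite c2 [c^* * c]mulrC hc [f^* * _]mulrC hf -rs; ring.
split; first exact: (UQ_from_V HV VT).
by exists (mkV a b c d e f); split => //; apply/matrixP => i j; rewrite -VT [X in _ = X]mxE.
Qed.

Lemma normc2 (x y : R) : Complex x y * (Complex x y)^* = rC (x ^+ 2 + y ^+ 2).
Proof.
change (Complex (x * x - y * - y) (x * - y + y * x) = Complex (x ^+ 2 + y ^+ 2) 0).
by congr Complex; ring.
Qed.

End S.
Section S2.
Variable R : realType.
Local Notation C := R[i].
Lemma general_case (p1 p2 p3 : R) : 0 < p1 -> 0 < p2 -> 0 < p3 -> p1 + p2 + p3 = 1 ->
  0 <= 4 * p1 ^+ 2 * p2 * p3 - (p1 - p1 ^+ 2 - p2 * p3) ^+ 2 ->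
  in_UQ3 (weyl_channel p1 p2 p3) /\ in_UC3 (Tm p1 p2 p3).
Proof.
move=> h1 h2 h3 hs hH.
set H := _ - _ in hH.
pose q1 := Num.sqrt p1; pose q2 := Num.sqrt p2; pose q3 := Num.sqrt p3.
pose s := Num.sqrt H.
have hq1 : q1 ^+ 2 = p1 by apply: sqr_sqrtr; apply: ltW.
have hq2 : q2 ^+ 2 = p2 by apply: sqr_sqrtr; apply: ltW.
have hq3 : q3 ^+ 2 = p3 by apply: sqr_sqrtr; apply: ltW.
have hs2 : s ^+ 2 = H by rewrite sqr_sqrtr.
have q1p : 0 < q1 by rewrite sqrtr_gt0.
have q2p : 0 < q2 by rewrite sqrtr_gt0.
have q3p : 0 < q3 by rewrite sqrtr_gt0.
have q1n : q1 != 0 by rewrite gt_eqF.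
have q2n : q2 != 0 by rewrite gt_eqF.
have q3n : q3 != 0 by rewrite gt_eqF.
pose A := p2 * p3 - p1 * p2 - p1 * p3.
pose B := p1 * p3 - p1 * p2 - p2 * p3.
have HA : H = 4 * p1 ^+ 2 * p2 * p3 - A ^+ 2.
  have e1 : p1 = 1 - p2 - p3 by rewrite -hs; ring.
  by rewrite /H /A e1; ring.
have HB : H = 4 * p1 * p2 ^+ 2 * p3 - B ^+ 2 by rewrite HA /A /B; ring.
pose dd := 2 * q1 * q2 * q3.
pose ee := 2 * q1 * p2.
have rq (q p : R) : q ^+ 2 = p -> rC q * (rC q)^* = rC p.
  by move=> hq; rewrite /rC normc2 expr0n /= addr0 hq.
apply: (@from_rows R p1 p2 p3 (rC q1) (rC q3) (rC q2) (rC q2)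
          (Complex (A / dd) (- (s / dd))) (Complex (B / ee) (s / ee))) => //;
  try exact: rq.
- rewrite normc2; congr (rC _).
  have ddn : dd != 0 by rewrite /dd !mulf_neq0 // pnatr_eq0.
  rewrite sqrrN (_ : (A / dd) ^+ 2 + (s / dd) ^+ 2 = (A ^+ 2 + s ^+ 2) / (dd ^+ 2)); last by field.
  rewrite hs2 HA (_ : dd ^+ 2 = 4 * (q1 ^+ 2 * q2 ^+ 2 * q3 ^+ 2)); last by rewrite /dd; ring.
  rewrite hq1 hq2 hq3.
  by field; rewrite !gt_eqF.
- rewrite normc2; congr (rC _).
  have een : ee != 0 by rewrite /ee !mulf_neq0 ?gt_eqF // pnatr_eq0.
  rewrite (_ : (B / ee) ^+ 2 + (s / ee) ^+ 2 = (B ^+ 2 + s ^+ 2) / (ee ^+ 2)); last by field.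
  rewrite hs2 HB (_ : ee ^+ 2 = 4 * (q1 ^+ 2 * p2 ^+ 2)); last by rewrite /ee; ring.
  rewrite hq1.
  by field; rewrite !gt_eqF.
- rewrite /rC; simpc.
  apply/eqP; rewrite eq_complex /=; apply/andP; split; apply/eqP;
  rewrite /A /B /dd /ee -?hq1 -?hq2 -?hq3;
  by field; rewrite ?q1n ?q2n ?q3n ?pnatr_eq0.
Qed.

Lemma sq0 (x : R) : 0 <= - x ^+ 2 -> x = 0.
Proof. by move=> h; apply/eqP; rewrite -sqrf_eq0 eq_le sqr_ge0 andbT -oppr_ge0. Qed.

Lemma cases_p (p1 p2 p3 : R) : 0 <= p1 -> 0 <= p2 -> 0 <= p3 -> p1 + p2 + p3 = 1 ->
  0 <= 4 * p1 ^+ 2 * p2 * p3 - (p1 - p1 ^+ 2 - p2 * p3) ^+ 2 ->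
  (0 < p1 /\ 0 < p2 /\ 0 < p3) \/ (p1 = 1 /\ p2 = 0 /\ p3 = 0) \/
  (p1 = 0 /\ p2 = 1 /\ p3 = 0) \/ (p1 = 0 /\ p2 = 0 /\ p3 = 1).
Proof.
move=> g1 g2 g3 hs hH.
case: (eqVneq p1 0) => [e1|n1].
  move: hH; rewrite e1 (_ : 4 * 0 ^+ 2 * p2 * p3 - (0 - 0 ^+ 2 - p2 * p3) ^+ 2 = - (p2 * p3) ^+ 2); last by ring.
  move/sq0/eqP; rewrite mulf_eq0 => /orP [/eqP e2 | /eqP e3].
    by right; right; right; split => //; split => //; move: hs; rewrite e1 e2; lra.
  by right; right; left; split => //; split => //; move: hs; rewrite e1 e3; lra.
have l1 : 0 < p1 by rewrite lt_def n1 g1.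
have p1e : p1 - p1 ^+ 2 = 0 -> p1 = 1.
  move=> h; have : p1 * (1 - p1) = 0 by rewrite -h; ring.
  move/eqP; rewrite mulf_eq0 (negbTE n1) /= subr_eq0 => /eqP; lra.
case: (eqVneq p2 0) => [e2|n2].
  move: hH; rewrite e2 (_ : 4 * p1 ^+ 2 * 0 * p3 - (p1 - p1 ^+ 2 - 0 * p3) ^+ 2 = - (p1 - p1 ^+ 2) ^+ 2); last by ring.
  move/sq0/p1e => e1; right; left; split => //; split => //; move: hs; rewrite e1 e2; lra.
case: (eqVneq p3 0) => [e3|n3].
  move: hH; rewrite e3 (_ : 4 * p1 ^+ 2 * p2 * 0 - (p1 - p1 ^+ 2 - p2 * 0) ^+ 2 = - (p1 - p1 ^+ 2) ^+ 2); last by ring.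
  move/sq0/p1e => e1; exfalso; move: n2; rewrite -(subr_eq0 p2 0) subr0.
  have -> : p2 = 0 by move: hs; rewrite e1 e3; lra.
  by rewrite eqxx.
by left; split => //; split; rewrite lt_def ?n2 ?n3 ?g2 ?g3.
Qed.

Ltac vt := rewrite ?conjC0 ?conjC1 ?mul0r ?mulr0 ?mulr1 ?add0r ?addr0; try reflexivity.

Lemma all_cases (p1 p2 p3 : R) : 0 <= p1 -> 0 <= p2 -> 0 <= p3 -> p1 + p2 + p3 = 1 ->
  0 <= 4 * p1 ^+ 2 * p2 * p3 - (p1 - p1 ^+ 2 - p2 * p3) ^+ 2 ->
  in_UQ3 (weyl_channel p1 p2 p3) /\ in_UC3 (Tm p1 p2 p3).
Proof.
move=> g1 g2 g3 hs hH.
case: (cases_p g1 g2 g3 hs hH) => [[l1 [l2 l3]]|[[-> [-> ->]]|[[-> [-> ->]]|[-> [-> ->]]]]].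
- exact: general_case.
- by apply: (@from_rows R 1 0 0 1 0 0 0 1 0); vt.
- by apply: (@from_rows R 0 1 0 0 0 1 1 0 0); vt.
- by apply: (@from_rows R 0 0 1 0 1 0 0 0 1); vt.
Qed.
End S2.

Theorem proposition10 (R : realType) (p1 p2 p3 : R) :
  0 <= p1 -> 0 <= p2 -> 0 <= p3 -> p1 + p2 + p3 = 1 ->
  0 <= 4 * p1 ^+ 2 * p2 * p3 - (p1 - p1 ^+ 2 - p2 * p3) ^+ 2 ->
  in_UQ3 (weyl_channel p1 p2 p3) /\
  transition (weyl_channel p1 p2 p3)
    = rC p1 *: 1%:M + rC p2 *: shiftX R + rC p3 *: shiftX R ^+ 2 /\
  in_UC3 (transition (weyl_channel p1 p2 p3)).
Proof.
move=> g1 g2 g3 hs hH.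
rewrite transition_weyl.
have [HQ HC] := all_cases g1 g2 g3 hs hH.
by split => //; split.
Qed.
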